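(* Let $q\ge1$, $M>0$, $\alpha=2^{q+1}+8$, and let $\{J_i\}_{i=1}^m$ be an assignment satisfying $\mathbb{E}\big[(\sum_{i=1}^m(\sum_{j\in J_i}Y_j)^q)^{1/q}\big]\le M$. Then $\sum_{j=1}^n\mathbb{E}[(Y'_j)^q]\le\alpha M^q$.
   Context: Nonnegative random variables $X_{ij}$ (size of job $j$ on machine $i$), with $X_{ij}$ and $X_{i'j'}$ independent whenever $j\ne j'$. For an assignment $\{J_i\}$ (partition of $[n]$), $Y_j:=X_{ij}$ where $j\in J_i$ (so the $Y_j$ are independent). Truncated part $Y'_j:=Y_j\mathbf{1}[Y_j\le M]$. *)

(* Defs.v *)
From mathcomp Require Import all_boot all_order all_algebra.
From mathcomp Require Import all_classical all_reals all_analysis.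
Set Implicit Arguments. Unset Strict Implicit. Unset Printing Implicit Defensive.
Import Order.TTheory GRing.Theory Num.Theory.
Local Open Scope classical_set_scope.
Local Open Scope ring_scope.

Definition trunc (R : realType) (M y : R) : R := if y <= M then y else 0.

(* Size of job j under assignment a (job j goes to machine a j):
   Y_j := X_{a j, j}. *)
Definition Yassign (R : realType) (T : Type) (m n : nat)
  (X : 'I_m -> 'I_n -> T -> R) (a : 'I_n -> 'I_m) (j : 'I_n) : T -> R :=
  X (a j) j.

(* Independence across jobs: the random vectors (X_{1j},...,X_{mj}), j in [n],
   are mutually independent, i.e. for all Borel sets B_{ij},
   P(/\_j /\_i {X_{ij} in B_{ij}}) = prod_j P(/\_i {X_{ij} in B_{ij}}).
   (Taking B_{ij} = setT gives the product rule for every subfamily of jobs.) *)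
Definition jobs_independent (R : realType) (d : measure_display)
  (T : measurableType d) (P : probability T R) (m n : nat)
  (X : 'I_m -> 'I_n -> T -> R) : Prop :=
  forall B : 'I_m -> 'I_n -> set R,
    (forall i j, measurable (B i j)) ->
    P (\bigcap_(j in [set: 'I_n]) \bigcap_(i in [set: 'I_m]) (X i j @^-1` B i j))
    = (\prod_(j < n) P (\bigcap_(i in [set: 'I_m]) (X i j @^-1` B i j)))%E.

(* Main.v *)
Require Import Defs.
From mathcomp Require Import all_boot all_order all_algebra.
From mathcomp Require Import all_classical all_reals all_analysis.
From mathcomp Require Import ring lra measurable_realfun.
Import Order.TTheory GRing.Theory Num.Theory.
Local Open Scope classical_set_scope.
Local Open Scope ring_scope.

Section RealLemmas.
Variable R : realType.

Lemma powR_superadd {q a b : R} : 1 <= q -> 0 <= a -> 0 <= b ->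
  powR a q + powR b q <= powR (a + b) q.
Proof.
move=> q1 a0 b0.
have q0 : 0 < q by apply: lt_le_trans q1; rewrite ltr01.
have [s0|s0] := eqVneq (a + b) 0.
  have a0' : a = 0 by lra.
  have b0' : b = 0 by lra.
  by rewrite a0' b0' addr0 powR0 ?gt_eqF // addr0.
have q10 : 0 <= q - 1 by rewrite subr_ge0.
rewrite -(mulr_powRB1 a0 q0) -(mulr_powRB1 b0 q0) -(mulr_powRB1 (addr_ge0 a0 b0) q0).
rewrite mulrDl lerD //; apply: ler_wpM2l => //;
  apply: ge0_ler_powR => //; rewrite ?nnegrE ?addr_ge0 //; lra.
Qed.

Lemma powR_sum_superadd (q : R) I (r : seq I) (Pr : pred I) (f : I -> R) :
  1 <= q -> (forall i, 0 <= f i) ->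
  \sum_(i <- r | Pr i) powR (f i) q <= powR (\sum_(i <- r | Pr i) f i) q.
Proof.
move=> q1 f0.
have q0 : q != 0 by apply/negP => /eqP q0; move: q1; rewrite q0; lra.
pose K := fun y1 y2 : R => y1 <= powR y2 q /\ 0 <= y2.
have : K (\sum_(i <- r | Pr i) powR (f i) q) (\sum_(i <- r | Pr i) f i).
  apply: (big_rec2 K); first by split; rewrite ?powR0 //.
  move=> i y1 y2 _ [h1 h2]; split; last by rewrite addr_ge0.
  apply: (le_trans _ (powR_superadd q1 (f0 i) h2)).
  by rewrite lerD.
by case.
Qed.

Definition cnt (N : nat) (x : R) : R := \sum_(k < N) (((k.+1)%:R <= x)%R)%:R.

Lemma cnt_full N x : N%:R <= x -> cnt N x = N%:R.
Proof.
move=> hx; rewrite /cnt (eq_bigr (fun=> 1)).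
  by rewrite sumr_const card_ord.
move=> k _; rewrite (_ : ((k.+1)%:R <= x)%R = true) //.
apply: le_trans hx; rewrite ler_nat; exact: ltn_ord.
Qed.

Lemma cnt_ge0 N x : 0 <= cnt N x.
Proof. by apply: sumr_ge0 => k _; rewrite ler0n. Qed.

Lemma cnt_bounds N x : 0 <= x -> cnt N x <= x /\ (x <= N%:R -> x <= cnt N x + 1).
Proof.
move=> x0; elim: N => [|N [IH1 IH2]].
  by rewrite /cnt big_ord0; split => // h; lra.
have E : cnt N.+1 x = cnt N x + (((N.+1)%:R <= x)%R)%:R.
  by rewrite /cnt big_ord_recr.
rewrite E; have [h|h] := leP ((N.+1)%:R : R) x; rewrite /=.
  rewrite cnt_full; last by apply: le_trans h; rewrite ler_nat.
  split; first by rewrite natr1.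
  move=> hx; rewrite natr1; lra.
rewrite addr0; split => //.
move=> hx; have [hN|hN] := leP x (N%:R : R); first exact: IH2.
rewrite cnt_full; last exact: ltW.
by move: h; rewrite -natr1 => h; lra.
Qed.

End RealLemmas.

Section Helpers.
Context {d : measure_display} {T : measurableType d} {R : realType} {P : probability T R}.

Lemma intb (f : T -> R) (C : R) : measurable_fun setT f ->
  (forall t, `|f t| <= C) -> P.-integrable setT (EFin \o f).
Proof.
move=> mf hC; apply: measurable_bounded_integrable => //.
  by apply: (le_lt_trans (probability_le1 P measurableT)); rewrite ltry.
rewrite /bounded_near; near=> M0.
move=> t _ /=; have h := hC t; suff : C <= M0 by move=> h2; exact: le_trans h h2.
near: M0; apply: nbhs_pinfty_ge; exact: num_real.
Unshelve. all: end_near. Qed.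

Lemma iD {f g : T -> R} : P.-integrable setT (EFin \o f) ->
  P.-integrable setT (EFin \o g) ->
  P.-integrable setT (EFin \o (fun t => f t + g t)).
Proof.
move=> hf hg; rewrite (_ : EFin \o _ = ((EFin \o f) \+ (EFin \o g))%E).
  exact: integrableD.
by apply/funext => t /=; rewrite EFinD.
Qed.

Lemma iB {f g : T -> R} : P.-integrable setT (EFin \o f) ->
  P.-integrable setT (EFin \o g) ->
  P.-integrable setT (EFin \o (fun t => f t - g t)).
Proof.
move=> hf hg; rewrite (_ : EFin \o _ = ((EFin \o f) \- (EFin \o g))%E).
  exact: integrableB.
by apply/funext => t /=; rewrite EFinB.
Qed.

Lemma iZ (k : R) {f : T -> R} : P.-integrable setT (EFin \o f) ->
  P.-integrable setT (EFin \o (fun t => k * f t)).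
Proof.
move=> hf; rewrite (_ : EFin \o _ = (fun t => k%:E * (EFin \o f) t)%E).
  exact: integrableZl.
by apply/funext => t /=; rewrite EFinM.
Qed.

Lemma RD (f g : T -> R) : P.-integrable setT (EFin \o f) ->
  P.-integrable setT (EFin \o g) ->
  Rintegral P setT (fun t => f t + g t) = Rintegral P setT f + Rintegral P setT g.
Proof. by move=> hf hg; rewrite RintegralD. Qed.

Lemma RB (f g : T -> R) : P.-integrable setT (EFin \o f) ->
  P.-integrable setT (EFin \o g) ->
  Rintegral P setT (fun t => f t - g t) = Rintegral P setT f - Rintegral P setT g.
Proof. by move=> hf hg; rewrite RintegralB. Qed.

Lemma RZ (k : R) (f : T -> R) : P.-integrable setT (EFin \o f) ->
  Rintegral P setT (fun t => k * f t) = k * Rintegral P setT f.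
Proof. by move=> hf; rewrite RintegralZl. Qed.

Lemma Rint_indic (A : set T) : measurable A ->
  Rintegral P setT (\1_A) = fine (P A).
Proof. by move=> mA; rewrite /Rintegral integral_indic // setIT. Qed.

Lemma Rint_cst (r : R) : Rintegral P setT (fun _ => r) = r.
Proof.
rewrite Rintegral_cst // (_ : fine _ = 1) ?mulr1 //.
exact: (congr1 fine (probability_setT P)).
Qed.

Lemma Rint_sum I (s : seq I) (f : I -> T -> R) :
  (forall i, P.-integrable setT (EFin \o f i)) ->
  P.-integrable setT (EFin \o (fun t => \sum_(i <- s) f i t)) /\
  Rintegral P setT (fun t => \sum_(i <- s) f i t) = \sum_(i <- s) Rintegral P setT (f i).
Proof.
move=> hf; elim: s => [|i s [IH1 IH2]].
  under eq_fun do rewrite big_nil.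
  split; last by rewrite big_nil Rint_cst.
  exact: finite_measure_integrable_cst.
have -> : (fun t => \sum_(j <- i :: s) f j t) =
          (fun t => f i t + \sum_(j <- s) f j t).
  by apply/funext => t; rewrite big_cons.
split; first exact: (iD (hf i) IH1).
by rewrite big_cons RintegralD // IH2.
Qed.

Lemma Rint_EFin (f : T -> R) : P.-integrable setT (EFin \o f) ->
  (\int[P]_t (f t)%:E)%E = (Rintegral P setT f)%:E.
Proof. by move=> hf; rewrite /Rintegral fineK // integrable_fin_num. Qed.

End Helpers.

Lemma pointwise_cheb {R : realType} {q x mu : R} : 0 < q -> 0 <= x -> 0 < mu ->
  powR (mu / 2) q^-1 * ((mu / 2) ^+ 2 - (x - mu) ^+ 2) <= (mu / 2) ^+ 2 * powR x q^-1.
Proof.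
move=> q0 x0 mu0.
set c := mu / 2; set k := powR c q^-1.
have c0 : 0 < c by rewrite /c divr_gt0.
have k0 : 0 <= k by apply: powR_ge0.
have [cx|xc] := leP c x.
  have kx : k <= powR x q^-1.
    by apply: ge0_ler_powR; rewrite ?nnegrE ?invr_ge0 ?(ltW q0) ?(ltW c0).
  have h1 : k * (c ^+ 2 - (x - mu) ^+ 2) <= k * c ^+ 2.
    by apply: ler_wpM2l => //; rewrite lerBlDr lerDl sqr_ge0.
  apply: le_trans h1 _; rewrite mulrC; apply: ler_wpM2l => //; exact: sqr_ge0.
have h : c ^+ 2 - (x - mu) ^+ 2 <= 0.
  rewrite subr_le0 /c; rewrite /c in xc; nra.
apply: le_trans (_ : 0 <= _); last by apply: mulr_ge0; [exact: sqr_ge0|exact: powR_ge0].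
rewrite mulrC; exact: mulr_le0_ge0.
Qed.

Section Cheb.
Context d (T : measurableType d) (R : realType) (P : probability T R).

Lemma cheb_bound (s : T -> R) (B q mu : R) : 1 <= q ->
  measurable_fun setT s -> (forall t, 0 <= s t <= B) ->
  Rintegral P setT s = mu ->
  Rintegral P setT (fun t => s t ^+ 2) <= mu ^+ 2 + mu ->
  Rintegral P setT (fun t => powR (s t) q^-1) <= 1 ->
  8 <= mu -> mu <= powR 2 (q + 1).
Proof.
move=> q1 ms sB Es Es2 Ep mu8.
have q0 : 0 < q by apply: lt_le_trans q1; rewrite ltr01.
have mu0 : 0 < mu by apply: lt_le_trans mu8.
set c := mu / 2; set k := powR c q^-1.
have B0 : 0 <= B by case/andP: (sB point) => h1 h2; apply: le_trans h2.
have ms2 : measurable_fun setT (fun t => s t ^+ 2).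
  exact: measurable_funX.
have mp : measurable_fun setT (fun t => powR (s t) q^-1).
  exact: (measurableT_comp (measurable_powR _) ms).
have is1 : P.-integrable setT (EFin \o s).
  apply: (@intb _ _ _ P _ B ms) => t; case/andP: (sB t) => h1 h2.
  by rewrite ger0_norm.
have is2 : P.-integrable setT (EFin \o (fun t => s t ^+ 2)).
  apply: (@intb _ _ _ P _ (B ^+ 2) ms2) => t; case/andP: (sB t) => h1 h2.
  rewrite ger0_norm ?sqr_ge0 //; apply: ler_pM => //.
have ip : P.-integrable setT (EFin \o (fun t => powR (s t) q^-1)).
  apply: (@intb _ _ _ P _ (powR B q^-1) mp) => t; case/andP: (sB t) => h1 h2.
  rewrite ger0_norm ?powR_ge0 //; apply: ge0_ler_powR => //;
    rewrite ?nnegrE ?invr_ge0 ?(ltW q0) //.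
have icst : forall r : R, P.-integrable setT (EFin \o (fun _ : T => r)).
  move=> r; exact: finite_measure_integrable_cst.
have Ecst : forall r : R, Rintegral P setT (fun _ : T => r) = r.
  by move=> r; rewrite Rint_cst.
have pw : forall t, k * c ^+ 2 - k * (s t ^+ 2) + (2 * k * mu) * s t - k * mu ^+ 2
                    <= c ^+ 2 * powR (s t) q^-1.
  move=> t; case/andP: (sB t) => h1 _.
  apply: (le_trans _ (pointwise_cheb q0 h1 mu0)); rewrite le_eqVlt; apply/orP; left; apply/eqP; rewrite /k /c; ring.
have ig1 : P.-integrable setT (EFin \o (fun t => k * c ^+ 2 - k * (s t ^+ 2))).
  apply: iB => //; exact: iZ.
have ig2 : P.-integrable setT
    (EFin \o (fun t => k * c ^+ 2 - k * (s t ^+ 2) + (2 * k * mu) * s t)).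
  apply: iD => //; exact: iZ.
have Eg : Rintegral P setT
    (fun t => k * c ^+ 2 - k * (s t ^+ 2) + (2 * k * mu) * s t - k * mu ^+ 2)
    = k * c ^+ 2 - k * Rintegral P setT (fun t => s t ^+ 2) + 2 * k * mu * mu
      - k * mu ^+ 2.
  rewrite (RB (fun t => k * c ^+ 2 - k * (s t ^+ 2) + (2 * k * mu) * s t)
              (fun _ => k * mu ^+ 2)) //.
  rewrite (RD (fun t => k * c ^+ 2 - k * (s t ^+ 2)) (fun t => (2 * k * mu) * s t)) //;
    last exact: iZ.
  rewrite (RB (fun _ => k * c ^+ 2) (fun t => k * (s t ^+ 2))) //; last exact: iZ.
  rewrite (RZ (2 * k * mu) s) // (RZ k (fun t => s t ^+ 2)) //.
  by rewrite !Ecst Es.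
have Ele : Rintegral P setT
    (fun t => k * c ^+ 2 - k * (s t ^+ 2) + (2 * k * mu) * s t - k * mu ^+ 2)
    <= Rintegral P setT (fun t => c ^+ 2 * powR (s t) q^-1).
  apply: le_Rintegral => //; first by apply: iB.
  exact: iZ.
rewrite Eg (RZ (c ^+ 2) (fun t => powR (s t) q^-1)) // in Ele.
have k0 : 0 <= k by apply: powR_ge0.
have kle : k <= 2.
  have h2 : c ^+ 2 * Rintegral P setT (fun t => powR (s t) q^-1) <= c ^+ 2.
    by rewrite -[leRHS]mulr1; apply: ler_wpM2l => //; exact: sqr_ge0.
  have h3 : k * Rintegral P setT (fun t => s t ^+ 2) <= k * (mu ^+ 2 + mu).
    exact: ler_wpM2l.
  set E2 := Rintegral P setT (fun t => s t ^+ 2) in Ele h3.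
  set Eq := Rintegral P setT (fun t => powR (s t) q^-1) in Ele h2.
  have h4 : k * (mu ^+ 2 - 4 * mu) <= mu ^+ 2.
    rewrite /c in Ele h2; nra.
  have h5 : 0 <= k * (mu * (mu - 8)).
    apply: mulr_ge0 => //; apply: mulr_ge0; [exact: ltW|lra].
  have h6 : k * mu ^+ 2 <= 2 * mu ^+ 2 by nra.
  have mu2 : 0 < mu ^+ 2 by apply: exprn_gt0.
  by rewrite -(ler_pM2r mu2).
have : c <= powR 2 q.
  have -> : c = powR k q.
    rewrite /k -powRrM mulVf ?gt_eqF // powRr1 // /c; apply: divr_ge0 => //.
    exact: ltW.
  apply: ge0_ler_powR => //; rewrite ?nnegrE //; exact: ltW.
rewrite powRD; last by apply/implyP => _; rewrite pnatr_eq0.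
rewrite powRr1 // /c; nra.
Qed.

End Cheb.

Section Core.
Context {d : measure_display} {T : measurableType d} {R : realType} {P : probability T R}.
Variables (n N : nat) (U : 'I_n -> T -> R).
Hypothesis mU : forall j, measurable_fun setT (U j).
Hypothesis U01 : forall j t, 0 <= U j t <= 1.

Definition Aev (j : 'I_n) (k : 'I_N) : set T :=
  [set t | ((k.+1)%:R <= N%:R * U j t)%R].

Lemma mAev j k : measurable (Aev j k).
Proof.
have mg : measurable_fun setT (fun t => N%:R * U j t).
  by apply: measurable_funM => //; exact: measurable_cst.
have := mg measurableT _ (measurable_itv `[((k.+1)%:R : R), +oo[).
rewrite setTI; congr measurable; apply/seteqP; split => t /=;
  by rewrite in_itv /= andbT.
Qed.

Lemma Rint_sumo {K : nat} (f : 'I_K -> T -> R) :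
  (forall i, P.-integrable setT (EFin \o f i)) ->
  P.-integrable setT (EFin \o (fun t => \sum_(i < K) f i t)) /\
  Rintegral P setT (fun t => \sum_(i < K) f i t) = \sum_(i < K) Rintegral P setT (f i).
Proof. exact: Rint_sum. Qed.

Lemma cnt_eq j t : \sum_(k < N) \1_(Aev j k) t = cnt R N (N%:R * U j t).
Proof.
rewrite /cnt; apply: eq_bigr => k _; rewrite indicE.
have [h|h] := leP ((k.+1)%:R : R) (N%:R * U j t).
  by rewrite mem_set.
by rewrite memNset //= /Aev; apply/negP; rewrite -ltNge.
Qed.


Lemma iIndic {A : set T} : measurable A -> P.-integrable setT (EFin \o \1_A).
Proof. by move=> mA; exact: integrable_indic. Qed.

Lemma core (q : R) : 1 <= q -> (0 < N)%N ->
  (forall j l k k', j != l ->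
     P (Aev j k `&` Aev l k') = (P (Aev j k) * P (Aev l k'))%E) ->
  (\int[P]_t (powR (\sum_(j < n) U j t) q^-1)%:E <= 1)%E ->
  \sum_(j < n) Rintegral P setT (U j) <= powR 2 (q + 1) + 7 + n%:R / N%:R.
Proof.
move=> q1 N0 Hind hyp.
have q0 : 0 < q by apply: lt_le_trans q1; rewrite ltr01.
have N0r : 0 < (N%:R : R) by rewrite ltr0n.
pose S (t : T) : R := \sum_(j < n) \sum_(k < N) \1_(Aev j k) t.
pose pA j k := fine (P (Aev j k)).
pose nu := \sum_(j < n) \sum_(k < N) pA j k.
have pA0 j k : 0 <= pA j k by apply: fine_ge0; exact: measure_ge0.
have nu0 : 0 <= nu by apply: sumr_ge0 => j _; apply: sumr_ge0 => k _.
have [iS ES] : P.-integrable setT (EFin \o S) /\ Rintegral P setT S = nu.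
  have h1 j := Rint_sumo (fun k => \1_(Aev j k)) (fun k => iIndic (mAev j k)).
  have := Rint_sumo (fun j t => \sum_(k < N) \1_(Aev j k) t) (fun j => (h1 j).1).
  move=> [i2 e2]; split => //; rewrite /S e2; apply: eq_bigr => j _.
  by rewrite (h1 j).2; apply: eq_bigr => k _; rewrite Rint_indic //; exact: mAev.
pose pAA j k l k' := fine (P (Aev j k `&` Aev l k')).
have S2 t : S t ^+ 2 = \sum_(j < n) \sum_(k < N) \sum_(l < n) \sum_(k' < N)
                        \1_(Aev j k `&` Aev l k') t.
  rewrite expr2 /S big_distrl; apply: eq_bigr => j _ /=.
  rewrite big_distrl; apply: eq_bigr => k _ /=.
  rewrite big_distrr; apply: eq_bigr => l _ /=.
  rewrite big_distrr; apply: eq_bigr => k' _ /=.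
  by rewrite indicI.
have mI j k l k' : measurable (Aev j k `&` Aev l k').
  by apply: measurableI; exact: mAev.
have [iS2 ES2] : P.-integrable setT (EFin \o (fun t => S t ^+ 2)) /\
    Rintegral P setT (fun t => S t ^+ 2) =
    \sum_(j < n) \sum_(k < N) \sum_(l < n) \sum_(k' < N) pAA j k l k'.
  have h4 j k l := Rint_sumo (fun k' => \1_(Aev j k `&` Aev l k'))
                    (fun k' => iIndic (mI j k l k')).
  have h3 j k := Rint_sumo (fun l t => \sum_(k' < N) \1_(Aev j k `&` Aev l k') t)
                    (fun l => (h4 j k l).1).
  have h2 j := Rint_sumo (fun k t => \sum_(l < n) \sum_(k' < N) \1_(Aev j k `&` Aev l k') t)
                    (fun k => (h3 j k).1).
  have h1 := Rint_sumo (fun j t => \sum_(k < N) \sum_(l < n) \sum_(k' < N) \1_(Aev j k `&` Aev l k') t)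
                    (fun j => (h2 j).1).
  rewrite (_ : (fun t => S t ^+ 2) = (fun t => \sum_(j < n) \sum_(k < N) \sum_(l < n) \sum_(k' < N)
                        \1_(Aev j k `&` Aev l k') t)); last by apply/funext => t; rewrite S2.
  split; first exact: h1.1.
  rewrite h1.2; apply: eq_bigr => j _; rewrite (h2 j).2; apply: eq_bigr => k _.
  rewrite (h3 j k).2; apply: eq_bigr => l _; rewrite (h4 j k l).2; apply: eq_bigr => k' _.
  by rewrite Rint_indic.
have pAAle j k l k' : pAA j k l k' <= pA j k * pA l k' + (j == l)%:R * pA j k.
  have [<-|jl] := eqVneq j l.
    apply: ler_wpDl; first exact: mulr_ge0.
    rewrite /= mulr1n mul1r /pAA /pA.
    apply: fine_le; rewrite ?inE ?fin_num_measure //; try exact: mAev.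
    apply: measureIl; exact: mAev.
  rewrite /pAA Hind // fineM ?inE ?fin_num_measure //; try exact: mAev.
  by rewrite /= mulr0n mul0r addr0.
have inner j k : \sum_(l < n) \sum_(k' < N) (pA j k * pA l k' + (j == l)%:R * pA j k)
    = pA j k * nu + N%:R * pA j k.
  rewrite (eq_bigr (fun l => \sum_(k' < N) pA j k * pA l k' +
                             \sum_(k' < N) (j == l)%:R * pA j k)); last first.
    by move=> l _; rewrite big_split.
  rewrite big_split /= /nu mulr_sumr; congr (_ + _).
    by apply: eq_bigr => l _; rewrite mulr_sumr.
  rewrite (bigD1 j) //= [X in _ + X = _]big1.
    by rewrite addr0 eqxx sumr_const card_ord /= mulr1n mul1r mulr_natl.
  move=> l; rewrite eq_sym => /negPf ->; rewrite big1 // => k' _.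
  by rewrite /= mulr0n mul0r.
have ES2le : Rintegral P setT (fun t => S t ^+ 2) <= nu ^+ 2 + N%:R * nu.
  rewrite ES2.
  apply: (@le_trans _ _ (\sum_(j < n) \sum_(k < N) (pA j k * nu + N%:R * pA j k))).
    apply: ler_sum => j _; apply: ler_sum => k _; rewrite -inner.
    by apply: ler_sum => l _; apply: ler_sum => k' _; exact: pAAle.
  rewrite le_eqVlt; apply/orP; left; apply/eqP.
  rewrite (eq_bigr (fun j => \sum_(k < N) pA j k * nu + \sum_(k < N) N%:R * pA j k)); last first.
    by move=> j _; rewrite big_split.
  have e1 x : \sum_(j < n) \sum_(k < N) pA j k * x = nu * x.
    by rewrite /nu mulr_suml; apply: eq_bigr => j _; rewrite mulr_suml.
  have e2 : \sum_(j < n) \sum_(k < N) N%:R * pA j k = N%:R * nu.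
    by rewrite /nu mulr_sumr; apply: eq_bigr => j _; rewrite mulr_sumr.
  by rewrite big_split /= e1 e2 expr2.
have mS : measurable_fun setT S.
  apply: measurable_sum => j; apply: measurable_sum => k.
  exact: measurable_indic (mAev j k).
have Scnt t : S t = \sum_(j < n) cnt R N (N%:R * U j t).
  by apply: eq_bigr => j _; rewrite cnt_eq.
have UN j t : 0 <= N%:R * U j t.
  by apply: mulr_ge0; [exact: ltW | case/andP: (U01 j t)].
pose s (t : T) : R := N%:R^-1 * S t.
pose mu := N%:R^-1 * nu.
have ms : measurable_fun setT s.
  by apply: measurable_funM => //; exact: measurable_cst.
have sU t : s t <= \sum_(j < n) U j t.
  rewrite /s Scnt mulr_sumr; apply: ler_sum => j _.
  have h := (cnt_bounds R N _ (UN j t)).1.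
  apply: le_trans (ler_wpM2l _ h) _; first by rewrite invr_ge0 ltW.
  by rewrite mulrA mulVf ?gt_eqF // mul1r.
have Us t : \sum_(j < n) U j t <= s t + n%:R / N%:R.
  apply: (@le_trans _ _ (\sum_(j < n) (N%:R^-1 * cnt R N (N%:R * U j t) + N%:R^-1))).
    apply: ler_sum => j _.
    have h : N%:R * U j t <= N%:R.
      by rewrite -[leRHS]mulr1; apply: ler_wpM2l; [exact: ltW | case/andP: (U01 j t)].
    have h2 := (cnt_bounds R N _ (UN j t)).2 h.
    rewrite -[X in _ <= _ + X]mulr1 -mulrDr -(ler_pM2l N0r) mulrA mulfV ?gt_eqF // mul1r.
    exact: h2.
  rewrite big_split /= sumr_const card_ord -mulr_sumr -Scnt -/(s t).
  by rewrite -[_ *+ n]mulr_natl mulrC.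
have S0 t : 0 <= S t.
  by rewrite Scnt; apply: sumr_ge0 => j _; exact: cnt_ge0.
have sB t : 0 <= s t <= n%:R.
  apply/andP; split; first by apply: mulr_ge0; [rewrite invr_ge0 ltW | ].
  apply: le_trans (sU t) _.
  apply: (@le_trans _ _ (\sum_(j < n) (1 : R))).
    by apply: ler_sum => j _; case/andP: (U01 j t).
  by rewrite sumr_const card_ord.
have Es : Rintegral P setT s = mu by rewrite (RZ _ S) // ES.
have Es2 : Rintegral P setT (fun t => s t ^+ 2) <= mu ^+ 2 + mu.
  rewrite (_ : (fun t => s t ^+ 2) = (fun t => N%:R^-1 ^+ 2 * S t ^+ 2)); last first.
    by apply/funext => t; rewrite /s exprMn.
  rewrite (RZ _ (fun t => S t ^+ 2)) //.
  apply: le_trans (ler_wpM2l _ ES2le) _; first by rewrite exprn_ge0 // invr_ge0 ltW.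
  rewrite le_eqVlt; apply/orP; left; apply/eqP; rewrite /mu.
  by field; rewrite gt_eqF.
have mSU : measurable_fun setT (fun t => \sum_(j < n) U j t).
  by apply: measurable_sum.
have SU0 t : 0 <= \sum_(j < n) U j t.
  by apply: sumr_ge0 => j _; case/andP: (U01 j t).
have SUn t : \sum_(j < n) U j t <= n%:R.
  apply: (@le_trans _ _ (\sum_(j < n) (1 : R))).
    by apply: ler_sum => j _; case/andP: (U01 j t).
  by rewrite sumr_const card_ord.
have qi0 : 0 <= q^-1 by rewrite invr_ge0 ltW.
have iSUp : P.-integrable setT (EFin \o (fun t => powR (\sum_(j < n) U j t) q^-1)).
  apply: (@intb _ _ _ P _ (powR n%:R q^-1)).
    exact: (measurableT_comp (measurable_powR _) mSU).
  move=> t; rewrite ger0_norm ?powR_ge0 //; apply: ge0_ler_powR => //;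
    rewrite ?nnegrE //.
have isp : P.-integrable setT (EFin \o (fun t => powR (s t) q^-1)).
  apply: (@intb _ _ _ P _ (powR n%:R q^-1)).
    exact: (measurableT_comp (measurable_powR _) ms).
  move=> t; case/andP: (sB t) => h1 h2.
  rewrite ger0_norm ?powR_ge0 //; apply: ge0_ler_powR => //; rewrite ?nnegrE //.
have iss : P.-integrable setT (EFin \o s) by apply: iZ.
have Ep : Rintegral P setT (fun t => powR (s t) q^-1) <= 1.
  apply: (@le_trans _ _ (Rintegral P setT (fun t => powR (\sum_(j < n) U j t) q^-1))).
    apply: le_Rintegral => // t _; case/andP: (sB t) => h1 h2.
    by apply: ge0_ler_powR; rewrite ?nnegrE ?SU0 ?sU.
  by move: hyp; rewrite Rint_EFin // lee_fin.
have mule : mu <= powR 2 (q + 1) + 7.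
  have [mu8|mu8] := leP 8 mu.
    have := @cheb_bound _ _ _ P s n%:R q mu q1 ms sB Es Es2 Ep mu8; lra.
  have : 1 <= powR 2 (q + 1).
    rewrite -[X in X <= _](powRr0 2); apply: ler_powR; lra.
  lra.
have iU j : P.-integrable setT (EFin \o U j).
  apply: (@intb _ _ _ P _ 1 (mU j)) => t; case/andP: (U01 j t) => h1 h2.
  by rewrite ger0_norm.
rewrite -(Rint_sumo U iU).2.
apply: (@le_trans _ _ (Rintegral P setT (fun t => s t + n%:R / N%:R))).
  have i2 : P.-integrable setT (EFin \o (fun t => s t + n%:R / N%:R)).
    by apply: iD => //; exact: finite_measure_integrable_cst.
  apply: le_Rintegral => //; exact: (Rint_sumo U iU).1.
have E := RD s (fun _ => n%:R / N%:R) iss (finite_measure_integrable_cst _ _ measurableT).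
rewrite /= in E; rewrite E Es Rint_cst; lra.
Qed.

End Core.

Section Indep.
Context {R : realType} {d : measure_display} {T : measurableType d} {P : probability T R}.
Variables (m n : nat) (X : 'I_m -> 'I_n -> T -> R).

Lemma indep2 (i1 i2 : 'I_m) (j l : 'I_n) (B1 B2 : set R) :
  jobs_independent P X -> measurable B1 -> measurable B2 -> j != l ->
  P (X i1 j @^-1` B1 `&` X i2 l @^-1` B2) =
  (P (X i1 j @^-1` B1) * P (X i2 l @^-1` B2))%E.
Proof.
move=> Hind mB1 mB2 jl.
pose Bf (i : 'I_m) (j' : 'I_n) : set R :=
  if (j' == j) && (i == i1) then B1 else if (j' == l) && (i == i2) then B2 else setT.
have mBf i j' : measurable (Bf i j').
  by rewrite /Bf; case: ifP => _ //; case: ifP.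
have H := Hind Bf mBf.
pose G (j' : 'I_n) : set T := if j' == j then X i1 j @^-1` B1
  else if j' == l then X i2 l @^-1` B2 else setT.
have lj : l != j by rewrite eq_sym.
have HG j' : \bigcap_(i in [set: 'I_m]) (X i j' @^-1` Bf i j') = G j'.
  rewrite /G /Bf; apply/seteqP; split => t /=.
    move=> h; have [ej|j'j] := eqVneq j' j.
      by subst j'; have := h i1 I; rewrite eqxx /= eqxx.
    have [el|j'l] := eqVneq j' l; last by [].
    by subst j'; have := h i2 I; rewrite (negPf lj) eqxx /= eqxx.
  move=> h i _; have [ej|j'j] := eqVneq j' j.
    subst j'; move: h; rewrite eqxx => h /=.
    case: (eqVneq i i1) => [->|_] /=; first by [].
    by rewrite (negPf jl).
  have [el|j'l] := eqVneq j' l.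
    subst j'; move: h; rewrite (negPf lj) eqxx => h /=.
    by case: (eqVneq i i2) => [->|_].
  by rewrite /= ?(negPf j'j) ?(negPf j'l).
have LHS : \bigcap_(j' in [set: 'I_n]) \bigcap_(i in [set: 'I_m]) (X i j' @^-1` Bf i j')
    = X i1 j @^-1` B1 `&` X i2 l @^-1` B2.
  apply/seteqP; split => t /=.
    move=> h; split.
      by have := h j I; rewrite HG /G eqxx.
    by have := h l I; rewrite HG /G (negPf lj) eqxx.
  move=> [h1 h2] j' _; rewrite HG /G.
  have [ej|j'j] := eqVneq j' j; first by subst j'.
  by have [el|j'l] := eqVneq j' l; first subst j'.
rewrite -LHS H.
rewrite (eq_bigr (fun j' => P (G j'))); last by move=> j' _; rewrite HG.
rewrite (bigD1 j) //= (bigD1 l) //= big1.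
  by rewrite /G eqxx (negPf lj) eqxx mule1.
move=> j' /andP[j'j j'l]; rewrite /G (negPf j'j) (negPf j'l).
exact: probability_setT.
Qed.

End Indep.

Lemma meas_ge {R : realType} (g : R -> R) (c : R) : measurable_fun setT g ->
  measurable [set y | c <= g y].
Proof.
move=> mg; have := mg measurableT _ (measurable_itv `[c, +oo[).
rewrite setTI; congr measurable; apply/seteqP; split => t /=;
  by rewrite in_itv /= andbT.
Qed.

Theorem mainTheorem13 (R : realType) (d : measure_display) (T : measurableType d)
  (P : probability T R) (m n : nat) (X : 'I_m -> 'I_n -> T -> R)
  (Xmeas : forall i j, measurable_fun setT (X i j))
  (Xnonneg : forall i j t, 0 <= X i j t)
  (Xindep : jobs_independent P X)
  (q M : R) (hq : 1 <= q) (hM : 0 < M)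
  (a : 'I_n -> 'I_m)
  (hyp : (\int[P]_t
            (powR (\sum_(i < m) powR (\sum_(j < n | a j == i) Yassign X a j t) q)
                  q^-1)%:E
          <= M%:E)%E) :
  (\sum_(j < n) \int[P]_t (powR (trunc M (Yassign X a j t)) q)%:E
     <= ((powR 2 (q + 1) + 8) * powR M q)%:E)%E.
Proof.
have q0 : 0 < q by apply: lt_le_trans hq; rewrite ltr01.
have Mq0 : 0 < powR M q by apply: powR_gt0.
pose h (y : R) : R := powR (trunc M y) q / powR M q.
have mtr : measurable_fun setT (trunc M).
  rewrite (_ : trunc M = (fun y => if y <= M then y else 0)) //.
  apply: measurable_fun_ifT.
  - by apply: measurable_fun_ler => //; exact: measurable_cst.
  - exact: measurable_id.
  - exact: measurable_cst.
have mh : measurable_fun setT h.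
  apply: measurable_funM => //; exact: (measurableT_comp (measurable_powR _) mtr).
pose U (j : 'I_n) (t : T) : R := h (X (a j) j t).
have mU j : measurable_fun setT (U j).
  exact: (measurableT_comp mh (Xmeas _ _)).
have tr0 y : 0 <= y -> 0 <= trunc M y /\ trunc M y <= M /\ trunc M y <= y.
  move=> y0; rewrite /trunc; case: ifP => hy.
    by split => //; split.
  by split => //; split => //; exact: ltW.
have U01 j t : 0 <= U j t <= 1.
  have [h1 [h2 _]] := tr0 _ (Xnonneg (a j) j t).
  apply/andP; split; first by apply: divr_ge0 => //; exact: powR_ge0.
  rewrite ler_pdivrMr // mul1r; apply: ge0_ler_powR => //; rewrite ?nnegrE //.
  - exact: ltW.
  - exact: ltW.
have Hind j l k k' : j != l ->
    P (Aev n n.+1 U j k `&` Aev n n.+1 U l k') =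
    (P (Aev n n.+1 U j k) * P (Aev n n.+1 U l k'))%E.
  move=> jl.
  have mB (kk : 'I_n.+1) : measurable [set y | (kk.+1)%:R <= n.+1%:R * h y].
    apply: meas_ge; apply: measurable_funM => //; exact: measurable_cst.
  exact: (@indep2 _ _ _ P m n X (a j) (a l) j l _ _ Xindep (mB k) (mB k') jl).
pose L i t := \sum_(j < n | a j == i) Yassign X a j t.
pose Z t := powR (\sum_(i < m) powR (L i t) q) q^-1.
have mL i : measurable_fun setT (L i).
  rewrite (_ : L i = fun t => \sum_(j < n) (if a j == i then X (a j) j t else 0)).
    apply: measurable_sum => j; case: (a j == i); [exact: Xmeas | exact: measurable_cst].
  by apply/funext => t; rewrite /L big_mkcond.
have mZ : measurable_fun setT Z.
  apply: (measurableT_comp (measurable_powR _)).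
  apply: measurable_sum => i; exact: (measurableT_comp (measurable_powR _) (mL i)).
have qi0 : 0 <= q^-1 by rewrite invr_ge0 ltW.
have pw t : powR (\sum_(j < n) U j t) q^-1 <= M^-1 * Z t.
  pose W := \sum_(j < n) powR (trunc M (X (a j) j t)) q.
  have W0 : 0 <= W by apply: sumr_ge0 => j _; exact: powR_ge0.
  have -> : \sum_(j < n) U j t = W * (powR M q)^-1 by rewrite /W mulr_suml.
  rewrite powRM ?invr_ge0 ?powR_ge0 //.
  have -> : powR ((powR M q)^-1) q^-1 = M^-1.
    rewrite -powRN -powRrM mulNr mulfV ?gt_eqF // powR_inv1 //; exact: ltW.
  rewrite mulrC; apply: ler_wpM2l; first by rewrite invr_ge0 ltW.
  apply: ge0_ler_powR; rewrite ?nnegrE //.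
    by apply: sumr_ge0 => i _; exact: powR_ge0.
  rewrite /W (partition_big a predT) //=.
  apply: ler_sum => i _.
  apply: (@le_trans _ _ (\sum_(j < n | a j == i) powR (Yassign X a j t) q)).
    apply: ler_sum => j _; have [h1 [_ h3]] := tr0 _ (Xnonneg (a j) j t).
    by apply: ge0_ler_powR; rewrite ?nnegrE ?(ltW q0) ?Xnonneg.
  apply: powR_sum_superadd => // j; exact: Xnonneg.
have hyp' : (\int[P]_t (powR (\sum_(j < n) U j t) q^-1)%:E <= 1)%E.
  have step1 : (\int[P]_t (powR (\sum_(j < n) U j t) q^-1)%:E
               <= \int[P]_t ((M^-1)%:E * (Z t)%:E))%E.
    apply: ge0_le_integral => //.
    - by move=> t _; rewrite lee_fin powR_ge0.
    - apply/measurable_EFinP; apply: (measurableT_comp (measurable_powR _)).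
      exact: measurable_sum.
    - apply/measurable_EFinP; apply: measurable_funM => //; exact: measurable_cst.
    - by move=> t _; rewrite -EFinM lee_fin; exact: pw.
  apply: le_trans step1 _.
  rewrite ge0_integralZl_EFin //; last by rewrite invr_ge0 ltW.
  - apply: le_trans (lee_wpmul2l _ hyp) _; first by rewrite lee_fin invr_ge0 ltW.
    by rewrite -EFinM mulVf ?gt_eqF.
  - by move=> t _; rewrite lee_fin powR_ge0.
  - exact/measurable_EFinP.
have Hc := @core _ _ _ P n n.+1 U mU U01 q hq (ltn0Sn n) Hind hyp'.
have iU j : P.-integrable setT (EFin \o U j).
  apply: (@intb _ _ _ P _ 1 (mU j)) => t; case/andP: (U01 j t) => h1 h2.
  by rewrite ger0_norm.
have e j : (\int[P]_t (powR (trunc M (Yassign X a j t)) q)%:E =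
            (powR M q * Rintegral P setT (U j))%:E)%E.
  rewrite -(RZ (powR M q) (U j)) //; rewrite -Rint_EFin; last exact: iZ.
  apply: eq_integral => t _; congr EFin; rewrite /U /h /Yassign.
  by field; rewrite gt_eqF.
rewrite (eq_bigr _ (fun j _ => e j)) sumEFin lee_fin -mulr_sumr mulrC.
apply: ler_wpM2r; first exact: powR_ge0.
have : n%:R / n.+1%:R <= (1 : R).
  by rewrite ler_pdivrMr ?ltr0n // mul1r ler_nat.
move=> hn; apply: le_trans Hc _; rewrite -addrA lerD2l.
rewrite [leRHS](_ : _ = 7 + 1); last by lra.
by rewrite lerD2l.
Qed.
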